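(* Let $\Omega\subset\mathbb{R}^N$ be a bounded open connected set and let $w\in\mathrm{USC}(\overline{\Omega})$ be $\tilde{\mathcal{Q}}$-subharmonic in $\Omega$. If $w\le 0$ on $\partial\Omega$, then $w\le 0$ on $\Omega$.
   Context: $\mathcal{S}(N)$ is the space of real symmetric $N\times N$ matrices, $\lambda_N(A)$ the largest eigenvalue of $A$. $\tilde{\mathcal{Q}}:=\{(r,A)\in\mathbb{R}\times\mathcal{S}(N): r\le 0\text{ or }\lambda_N(A)\ge 0\}$. For $w$ defined near $x_0$, $J^+_{x_0}w:=\{(\varphi(x_0),D^2\varphi(x_0)):\varphi$ is $C^2$ near $x_0$, $w\le\varphi$ near $x_0$, $w(x_0)=\varphi(x_0)\}$. A function $w\in\mathrm{USC}(\Omega)$ (upper semicontinuous with values in $[-\infty,\infty)$) is $\tilde{\mathcal{Q}}$-subharmonic in $\Omega$ if $J^+_{x_0}w\subset\tilde{\mathcal{Q}}$ for every $x_0\in\Omega$. *)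

(* Defs.v *)
From HB Require Import structures.
From mathcomp Require Import all_boot all_order all_algebra.
From mathcomp Require Import all_classical all_reals all_analysis.
Set Implicit Arguments. Unset Strict Implicit. Unset Printing Implicit Defensive.
Import Order.TTheory GRing.Theory Num.Theory.
Import numFieldNormedType.Exports.
Local Open Scope classical_set_scope.
Local Open Scope ring_scope.

Section Defs.
Variables (R : realType) (N : nat).
Local Notation V := 'rV[R]_N.

Definition unitv (i : 'I_N) : V := delta_mx 0 i.

Definition partial (i : 'I_N) (f : V -> R) : V -> R :=
  fun x => 'D_(unitv i) f x.

Definition hessian (f : V -> R) (x : V) : 'M[R]_N :=
  \matrix_(i, j) partial i (partial j f) x.

Definition C2_near (f : V -> R) (x0 : V) : Prop :=
  exists2 e : R, 0 < e & forall y, ball x0 e y ->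
    [/\ differentiable f y,
        (forall i, differentiable (partial i f) y) &
        (forall i j, {for y, continuous (partial i (partial j f))})].

Definition lambda_max (A : 'M[R]_N) : R := sup [set a : R | eigenvalue A a].

Definition Qtilde : set (R * 'M[R]_N) :=
  [set rA | rA.2^T = rA.2 /\ (rA.1 <= 0 \/ 0 <= lambda_max rA.2)].

Definition superjet (w : V -> \bar R) (x0 : V) : set (R * 'M[R]_N) :=
  [set rA | exists phi : V -> R,
     [/\ C2_near phi x0,
         (\forall y \near x0, (w y <= (phi y)%:E)%E),
         w x0 = (phi x0)%:E,
         rA.1 = phi x0 & rA.2 = hessian phi x0]].

Definition Qtilde_subharmonic (w : V -> \bar R) (Omega : set V) : Prop :=
  forall x0, Omega x0 -> superjet w x0 `<=` Qtilde.

Definition usc_on (w : V -> \bar R) (D : set V) : Prop :=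
  forall x, D x -> (w x < +oo)%E /\
    (forall t : R, (w x < t%:E)%E ->
      \forall y \near x, D y -> (w y < t%:E)%E).

End Defs.

(* Main.v *)
Require Import Defs.
From HB Require Import structures.
From mathcomp Require Import all_boot all_order all_algebra.
From mathcomp Require Import all_classical all_reals all_analysis.
From mathcomp Require Import ring lra.
Import Order.TTheory GRing.Theory Num.Theory.
Import numFieldNormedType.Exports.
Local Open Scope classical_set_scope.
Local Open Scope ring_scope.

Section S.
Variables (R : realType) (N : nat).
Local Notation V := 'rV[R]_N.

Lemma coord_is_derive (k : 'I_N) (x v : V) :
  is_derive x v (fun y : V => y ord0 k) (v ord0 k).
Proof.
have @f : {linear V -> R}.
  by exists (fun M : V => M ord0 k); do 2![eexists]; do ?[constructor];
     rewrite ?mxE// => ? *; rewrite ?mxE//; move=> ?; rewrite !mxE.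
have fc : continuous f by apply: coord_continuous.
have -> : (fun y : V => y ord0 k) = f by [].
apply: DeriveDef; first exact/diff_derivable/linear_differentiable.
by rewrite deriveE ?diff_lin //; exact: linear_differentiable.
Qed.

Definition qf : V -> R := fun y => \sum_(k < N) (y ord0 k) ^+ 2.

Lemma qf_is_derive (x v : V) :
  is_derive x v qf (\sum_(k < N) (2 * x ord0 k * v ord0 k)).
Proof.
have -> : qf = \sum_(k < N) ((fun y : V => y ord0 k) ^+ 2).
  by apply/funext => y; rewrite /qf fct_sumE; apply: eq_bigr => i _; rewrite fctE.
apply: is_derive_eq.
  apply: is_derive_sum => k.
  exact: (is_deriveX 2 (coord_is_derive k x v)).
apply: eq_bigr => k _ /=.
by rewrite expr1.
Qed.

Definition phi (c eps : R) : V -> R := fun y => c - eps * qf y.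

Lemma sum_unitv (j : 'I_N) (F : 'I_N -> R) :
  \sum_(k < N) F k * @unitv R N j ord0 k = F j.
Proof.
rewrite (bigD1 j) //= big1 ?addr0; first by rewrite /unitv mxE !eqxx mulr1.
by move=> k kj; rewrite /unitv mxE eq_sym (negbTE kj) andbF mulr0.
Qed.

Lemma phi_is_derive c eps (x v : V) :
  is_derive x v (phi c eps) (- (eps * \sum_(k < N) (2 * x ord0 k * v ord0 k))).
Proof.
have -> : phi c eps = cst c - eps *: qf by apply/funext => y; rewrite /phi /= fctE.
apply: is_derive_eq; first exact: (is_deriveB (is_derive_cst c x v) (is_deriveZ eps (qf_is_derive x v))).
by rewrite sub0r.
Qed.

Lemma partial_phi c eps (j : 'I_N) :
  partial j (phi c eps) = fun x => - (eps * (2 * x ord0 j)).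
Proof.
apply/funext => x; rewrite /partial (@derive_val _ _ _ _ _ _ _ (phi_is_derive c eps x _)).
by rewrite sum_unitv.
Qed.

Lemma partial2_phi c eps (i j : 'I_N) :
  partial i (partial j (phi c eps)) = fun x => - (eps * (2 * (i == j)%:R)).
Proof.
rewrite partial_phi; apply/funext => x.
have -> : (fun x : V => - (eps * (2 * x ord0 j))) = - ((eps * 2) *: (fun x : V => x ord0 j)).
  by apply/funext => y; rewrite !fctE mulrA.
rewrite /partial (@derive_val _ _ _ _ _ _ _ (is_deriveN (is_deriveZ (eps * 2) (coord_is_derive j x (@unitv R N i))))).
by rewrite /unitv mxE eqxx /= eq_sym; congr (- _); exact: (esym (mulrA _ _ _)).
Qed.

Lemma hessian_phi c eps (x : V) : hessian (phi c eps) x = (- (2 * eps)) %:M.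
Proof.
apply/matrixP => i j; rewrite /hessian !mxE partial2_phi.
case: (i == j); rewrite ?mulr1 ?mulr0 ?mulr1n ?mulr0n ?oppr0 //; by rewrite mulrC.
Qed.

Lemma phi_C2 c eps (x0 : V) : C2_near (phi c eps) x0.
Proof.
exists 1 => // y _; split.
- have -> : phi c eps = cst c - eps *: qf by apply/funext => z; rewrite /phi /= fctE.
  apply: differentiableB; first exact: differentiable_cst.
  apply: differentiableZ.
  have -> : qf = \sum_(k < N) ((fun y : V => y ord0 k) ^+ 2).
    by apply/funext => z; rewrite /qf fct_sumE; apply: eq_bigr => i _; rewrite fctE.
  apply: differentiable_sum => k; apply: differentiableX; exact: differentiable_coord.
- move=> i; rewrite partial_phi.
  have -> : (fun x : V => - (eps * (2 * x ord0 i))) = - ((eps * 2) *: (fun x : V => x ord0 i)).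
    by apply/funext => z; rewrite !fctE mulrA.
  apply: differentiableN; apply: differentiableZ; exact: differentiable_coord.
- move=> i j; rewrite partial2_phi; exact: cst_continuous.
Qed.

Lemma lambda_max_scalar (c : R) : (0 < N)%N -> lambda_max (c%:M : 'M[R]_N) = c.
Proof.
move=> N0; rewrite /lambda_max.
have -> : [set a : R | eigenvalue (c%:M : 'M[R]_N) a] = [set c].
  apply/seteqP; split => a /=.
    move/eigenvalueP => [v]; rewrite mul_mx_scalar => /eqP; rewrite -subr_eq0 -scalerBl.
    by rewrite scaler_eq0 subr_eq0 => /orP[/eqP -> //|/eqP->]; rewrite eqxx.
  move=> ->; apply/eigenvalueP; exists (@unitv R N (Ordinal N0)); first by rewrite mul_mx_scalar.
  apply/eqP => /matrixP /(_ ord0 (Ordinal N0)); rewrite /unitv !mxE !eqxx /=.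
  by move/eqP; rewrite oner_eq0.
exact: sup1.
Qed.

Lemma qf_diff (y : V) : differentiable qf y.
Proof.
have -> : qf = \sum_(k < N) ((fun y : V => y ord0 k) ^+ 2).
  by apply/funext => z; rewrite /qf fct_sumE; apply: eq_bigr => i _; rewrite fctE.
apply: differentiable_sum => k; apply: differentiableX; exact: differentiable_coord.
Qed.

Lemma qf_ge0 (y : V) : 0 <= qf y.
Proof. by apply: sumr_ge0 => k _; apply: sqr_ge0. Qed.

Lemma coord_le_norm (y : V) k : `|y ord0 k| <= `|y|.
Proof.
rewrite [leRHS]/Num.norm /= mx_normrE; apply/bigmax_geP; right => /=; by exists (ord0, k).
Qed.

Lemma qf_le (y : V) (M : R) : `|y| <= M -> qf y <= (M ^+ 2) *+ N.
Proof.
move=> yM; rewrite /qf -[N in _ *+ N]card_ord -sumr_const; apply: ler_sum => k _.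
have := le_trans (coord_le_norm y k) yM; rewrite ler_norml => /andP[h1 h2].
nra.
Qed.

End S.
Arguments qf {R N}. Arguments phi {R N}.
Arguments qf_le {R N}. Arguments qf_ge0 {R N}. Arguments qf_diff {R N}.
Arguments phi_C2 {R N}. Arguments hessian_phi {R N}. Arguments lambda_max_scalar {R N}.

Local Open Scope ereal_scope.

Theorem theorem4p1 (R : realType) (N : nat) (Omega : set 'rV[R]_N)
  (w : 'rV[R]_N -> \bar R) :
  (0 < N)%N ->
  bounded_set Omega -> open Omega -> connected Omega ->
  usc_on w (closure Omega) ->
  Qtilde_subharmonic w Omega ->
  (forall x, (closure Omega `\` Omega) x -> (w x <= 0)%E) ->
  forall x, Omega x -> (w x <= 0)%E.
Proof.
move=> N0 Obd Oop _ Wusc Wsub Wbd x0 Ox0.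
rewrite leNgt; apply/negP => w0pos.
set K := closure Omega.
have Kcl : closed K by exact: closed_closure.
have OK : Omega `<=` K by exact: subset_closure.
have [M' [M'0 KM]] : exists M' : R, (0 <= M')%R /\ forall y, K y -> (`|y| <= M')%R.
  have [M [Mreal HM]] := Obd.
  have HM1 := HM (`|M| + 1)%R (ltr_pwDr ltr01 (real_ler_norm Mreal)).
  exists (`|M| + 1 + 1)%R; split; first by rewrite !addr_ge0.
  move=> y Ky; have [x [Ox bx]] := Ky _ (nbhsx_ballx y 1%R ltr01).
  rewrite -ball_normE /ball_ /= in bx.
  have -> : y = (x + (y - x))%R by rewrite addrC subrK.
  apply: (le_trans (ler_normD _ _)); apply: lerD; last exact: ltW.
  exact: HM1.
set Q := ((M' ^+ 2) *+ N)%R.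
have Q0 : (0 <= Q)%R by apply: mulrn_wge0; apply: sqr_ge0.
have KQ : forall y, K y -> (qf y <= Q)%R by move=> y /KM; apply: qf_le.
have wlt : forall y, K y -> w y < +oo by move=> y /Wusc [].
case Ew0 : (w x0) w0pos (wlt _ (OK _ Ox0)) => [a| |] // a0 _.
rewrite lte_fin in a0.
pose eps := (a / (2 * (Q + 1)))%R.
have eps0 : (0 < eps)%R by rewrite divr_gt0 // mulr_gt0 // ltr_pwDr.
have epsE : (eps * (2 * (Q + 1)) = a)%R by rewrite divfK // gt_eqF // mulr_gt0 // ltr_pwDr.
have epsQ : (eps * Q < a)%R by nra.
pose f := fun y => w y + (eps * qf y)%:E.
pose T := fun t : R => exists y, K y /\ t%:E <= f y.
pose C := fun t : R => [set y | K y /\ t%:E <= f y].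
have Ta : T a.
  exists x0; split; first exact: OK.
  by rewrite /f Ew0 -EFinD lee_fin lerDl; apply: mulr_ge0; [exact: ltW|exact: qf_ge0].
have FF : ProperFilter (filter_from T C).
  apply: filter_from_proper; last by move=> i [y Hy]; exists y.
  apply: filter_from_filter; first by exists a.
  move=> i j Ti Tj; case: (leP i j) => ij.
    exists j => // y [Ky fy]; split; split => //; exact: le_trans fy.
  exists i => // y [Ky fy]; split; split => //; apply: le_trans fy; rewrite lee_fin; exact: ltW.
have Kbd : bounded_set K.
  exists M'; split; first exact: num_real.
  by move=> z zM y Ky; apply: le_trans (KM y Ky) (ltW zM).
have cptK : compact K by apply: bounded_closed_compact.
have FK : filter_from T C K by exists a => // y [].
have [ys [Kys clys]] := cptK _ FF FK.
have fusc : forall y t, K y -> f y < t%:E -> \forall z \near y, K z -> f z < t%:E.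
  move=> y t Ky fyt.
  pose b := (t - eps * qf y)%R.
  have wyb : w y < b%:E.
    move: fyt; rewrite /f /b; case: (w y) (wlt y Ky) => [r| |] // _.
      by rewrite !lte_fin => ?; lra.
    by move=> _; exact: ltNyr.
  have [s [ws sb]] : exists s : R, w y < s%:E /\ (s < b)%R.
    move: wyb; case: (w y) => [r| |] //.
      by rewrite lte_fin => rb; exists ((r + b) / 2)%R; rewrite lte_fin; split; lra.
    by move=> _; exists (b - 1)%R; split; [exact: ltNyr| lra].
  have h1 := (Wusc y Ky).2 s ws.
  have gc : {for y, continuous (fun z => eps * qf z)}%R.
    apply: differentiable_continuous; apply: differentiableM; first exact: differentiable_cst.
    exact: qf_diff.
  have h2 : \forall z \near y, (eps * qf z < eps * qf y + (b - s))%R.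
    by apply: (cvgr_lt _ gc); rewrite ltrDl subr_gt0.
  move: h1 h2; apply: filterS2 => z H1 H2 Kz.
  have := H1 Kz; rewrite /f; case: (w z) => [r| |] //.
    by rewrite !lte_fin => ?; rewrite /b in sb H2; lra.
  by move=> _; rewrite addNye; exact: ltNyr.
have Cys : forall t, T t -> C t ys.
  move=> t Tt; split => //; rewrite leNgt; apply/negP => flt.
  have [z [[Kz tz] Hz]] := clys (C t) _ (ex_intro2 _ _ t Tt (fun _ h => h)) (fusc _ _ Kys flt).
  by move: (Hz Kz); rewrite ltNge tz.
have fmax : forall z, K z -> f z <= f ys.
  move=> z Kz; rewrite /f; case Ewz: (w z) (wlt z Kz) => [r| |] // _.
    have Tr : T (r + eps * qf z)%R by exists z; split => //; rewrite /f Ewz EFinD.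
    by have [_] := Cys _ Tr; rewrite EFinD.
  by rewrite addNye leNye.
have [_ Cya] := Cys a Ta.
case Ewy : (w ys) (wlt ys Kys) Cya => [r| |] // _; last by rewrite /f Ewy addNye leeNy_eq.
rewrite /f Ewy -EFinD lee_fin => ar.
have r0 : (0 < r)%R.
  have := KQ ys Kys => qQ.
  have : (eps * qf ys <= eps * Q)%R by rewrite ler_pM2l.
  lra.
have Oys : Omega ys.
  apply: contrapT => nO.
  have := Wbd ys (conj Kys nO); rewrite Ewy lee_fin; lra.
pose c := (r + eps * qf ys)%R.
have := Wsub ys Oys (r, hessian (phi c eps) ys).
have phiys : phi c eps ys = r by rewrite /phi /c; lra.
case.
  exists (phi c eps); split.
  - exact: phi_C2.
  - have := Oop ys Oys; apply: filterS => z Oz.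
    have := fmax z (OK z Oz); rewrite /f Ewy /phi -EFinD.
    case: (w z) (wlt z (OK z Oz)) => [r'| |] // _.
      rewrite -EFinD !lee_fin /c; lra.
    by move=> _; exact: leNye.
  - by rewrite Ewy phiys.
  - by rewrite phiys.
  - by [].
move=> _ /= [|]; first lra.
rewrite hessian_phi lambda_max_scalar //; lra.
Qed.
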